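(* Let $V$ be a finite set of truth values with a partial order $\leq$ having $0$ as least and $1$ as greatest element, and let $\models_{\leq}$ be the associated order-theoretic truth-relation (constant expressive semantics). Then every regular connective for $\models_{\leq}$ shares a regularity rule with some classical connective.
   Context: $\gamma\models_{\leq}\delta$ iff ($\exists x\in\gamma,\exists y\in\delta: x\leq y$) or $0\in\gamma$ or $1\in\delta$. Semantics: valuations mapping atoms to $V$, connectives interpreted by fixed truth functions, extended compositionally, every assignment to finitely many distinct atoms realized; constant expressive: every value is the constant value of some formula. $\Gamma\vdash\Delta$ iff $v(\Gamma)\models_{\leq}v(\Delta)$ for all $v$. An $n$-ary connective $C$ is regular with rule $(\mathcal{B}^p,\mathcal{B}^c)$, $\mathcal{B}^p,\mathcal{B}^c\subseteq\mathcal{P}(\{1..n\})^2$, if for all $\Gamma,\Delta,F_1..F_n$: $\Gamma\cup\{C(\vec F)\}\vdash\Delta$ iff for all $(B_p,B_c)\in\mathcal{B}^p$, $\Gamma\cup\{F_i:i\in B_p\}\vdash\{F_i:i\in B_c\}\cup\Delta$; $\Gamma\vdash\{C(\vec F)\}\cup\Delta$ iff the same for all $(B_p,B_c)\in\mathcal{B}^c$. Classical logic: $V=\{0,1\}$ with the relation $\gamma\models\delta$ iff ($\gamma\subseteq\{1\}\Rightarrow 1\in\delta$); classical connectives are truth functions $\{0,1\}^n\to\{0,1\}$. Connectives share a regularity rule if some $(\mathcal{B}^p,\mathcal{B}^c)$ is satisfied by both in their respective logics. *)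

(* Defs.v *)
From mathcomp Require Import all_boot all_order.
Set Implicit Arguments.
Unset Strict Implicit.
Unset Printing Implicit Defensive.
Import Order.TTheory.
Local Open Scope order_scope.

Inductive form (S : Type) (ar : S -> nat) : Type :=
| Atom : nat -> form ar
| App : forall c : S, ('I_(ar c) -> form ar) -> form ar.

Fixpoint eval (V S : Type) (ar : S -> nat)
  (I : forall c : S, ('I_(ar c) -> V) -> V) (v : nat -> V) (F : form ar) : V :=
  match F with
  | Atom a => v a
  | App c args => I c (fun i => eval I v (args i))
  end.

Definition vimage (V S : Type) (ar : S -> nat)
  (I : forall c : S, ('I_(ar c) -> V) -> V) (v : nat -> V)
  (G : form ar -> Prop) : V -> Prop :=
  fun x => exists F, G F /\ eval I v F = x.

Definition entails (V S : Type) (ar : S -> nat)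
  (I : forall c : S, ('I_(ar c) -> V) -> V)
  (rel : (V -> Prop) -> (V -> Prop) -> Prop)
  (G D : form ar -> Prop) : Prop :=
  forall v : nat -> V, rel (vimage I v G) (vimage I v D).

Definition constant_expressive (V S : Type) (ar : S -> nat)
  (I : forall c : S, ('I_(ar c) -> V) -> V) : Prop :=
  forall x : V, exists F : form ar, forall v : nat -> V, eval I v F = x.

Definition ord_rel (d : Order.disp_t) (V : finTBPOrderType d)
  (g dl : V -> Prop) : Prop :=
  (exists x y, g x /\ dl y /\ x <= y) \/ g \bot \/ dl \top.

Definition cl_rel (g dl : bool -> Prop) : Prop :=
  (forall x, g x -> x = true) -> dl true.

Definition set_add (T : Type) (G : T -> Prop) (F : T) : T -> Prop :=
  fun X => G X \/ X = F.
Definition set_union (T : Type) (G D : T -> Prop) : T -> Prop :=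
  fun X => G X \/ D X.
Definition sel (T : Type) (n : nat) (Fs : 'I_n -> T) (B : {set 'I_n}) : T -> Prop :=
  fun X => exists2 i, i \in B & X = Fs i.

Definition rule_holds (T : Type) (ent : (T -> Prop) -> (T -> Prop) -> Prop)
  (n : nat) (C : ('I_n -> T) -> T)
  (Bp Bc : {set {set 'I_n} * {set 'I_n}}) : Prop :=
  forall (G D : T -> Prop) (Fs : 'I_n -> T),
    (ent (set_add G (C Fs)) D <->
       (forall B, B \in Bp -> ent (set_union G (sel Fs B.1)) (set_union (sel Fs B.2) D)))
    /\
    (ent G (set_add D (C Fs)) <->
       (forall B, B \in Bc -> ent (set_union G (sel Fs B.1)) (set_union (sel Fs B.2) D))).

Definition regular (T : Type) (ent : (T -> Prop) -> (T -> Prop) -> Prop)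
  (n : nat) (C : ('I_n -> T) -> T) : Prop :=
  exists Bp Bc, rule_holds ent C Bp Bc.

(* Classical logic: its connectives are all truth functions {0,1}^n -> {0,1}. *)
Definition cl_sig : Type := {n : nat & ('I_n -> bool) -> bool}.
Definition cl_ar (c : cl_sig) : nat := projT1 c.
Definition cl_int (c : cl_sig) : ('I_(cl_ar c) -> bool) -> bool := projT2 c.
Definition cl_entails := entails cl_int cl_rel.

(* Main.v *)
Require Import Defs.
From mathcomp Require Import all_boot all_order.
Import Order.TTheory.
Local Open Scope order_scope.
Set Implicit Arguments.
Unset Strict Implicit.

Definition mt n (B : {set 'I_n} * {set 'I_n}) (x : 'I_n -> bool) : bool :=
  [forall i in B.1, x i] && [forall j in B.2, ~~ x j].
Definition PP n (Bs : {set {set 'I_n} * {set 'I_n}}) (x : 'I_n -> bool) : bool :=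
  [exists B in Bs, mt B x].

Lemma cl_part n (Bp Bc : {set {set 'I_n} * {set 'I_n}}) :
  (forall x, ~~ PP Bp x -> PP Bc x) -> (forall x, PP Bc x -> ~~ PP Bp x) ->
  rule_holds cl_entails (@App cl_sig cl_ar (existT _ n (PP Bp))) Bp Bc.
Proof.
move=> cov dis; rewrite /rule_holds /= => G D Fs.
pose xv v := fun i => eval cl_int v (Fs i).
have evC : forall v, eval cl_int v (@App cl_sig cl_ar (existT _ n (PP Bp)) Fs) = PP Bp (xv v).
  by [].
have mtI : forall (B : {set 'I_n} * {set 'I_n}) v, (forall i, i \in B.1 -> eval cl_int v (Fs i) = true) ->
   ~~ [exists j in B.2, eval cl_int v (Fs j)] -> mt B (xv v).
  move=> B v H1 H2; apply/andP; split; apply/forallP => i; apply/implyP => iB.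
    exact: H1.
  by move/existsPn: H2 => /(_ i); rewrite iB.
split; split.
- move=> H B HB v Hg.
  case: (boolP [exists j in B.2, eval cl_int v (Fs j)]) => [/existsP [j /andP [jB e]] | ne].
    by exists (Fs j); split; [left; exists j|].
  have M : mt B (xv v).
    apply: mtI ne => i iB; apply: Hg; exists (Fs i); split => //; right; by exists i.
  have [|F [DF e]] := H v.
    move=> y [F [[GF|->] <-]]; first by apply: Hg; exists F; split => //; left.
    rewrite evC; apply/existsP; exists B; by rewrite HB M.
  by exists F; split => //; right.
- move=> H v Hg.
  have : PP Bp (xv v) by rewrite -evC; apply: Hg; exists (@App cl_sig cl_ar (existT _ n (PP Bp)) Fs); split => //; right.
  move=> /existsP [B /andP [HB /andP [M1 M2]]].
  have [|F [[[j jB ->]|DF] e]] := H B HB v.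
    move=> y [F [[GF|[i iB ->]] <-]]; first by apply: Hg; exists F; split => //; left.
    by move/forallP: M1 => /(_ i); rewrite iB.
    by move/forallP: M2 => /(_ j); rewrite jB /= /xv e.
  by exists F.
- move=> H B HB v Hg.
  case: (boolP [exists j in B.2, eval cl_int v (Fs j)]) => [/existsP [j /andP [jB e]] | ne].
    by exists (Fs j); split; [left; exists j|].
  have M : mt B (xv v).
    apply: mtI ne => i iB; apply: Hg; exists (Fs i); split => //; right; by exists i.
  have nP : ~~ PP Bp (xv v) by apply: dis; apply/existsP; exists B; rewrite HB M.
  have [|F [[DF|->] e]] := H v.
    move=> y [F [GF <-]]; apply: Hg; exists F; split => //; by left.
    by exists F; split => //; right.
  by move: nP; rewrite -evC e.
- move=> H v Hg.
  case: (boolP (PP Bp (xv v))) => Pxv.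
    by exists (@App cl_sig cl_ar (existT _ n (PP Bp)) Fs); split; [right|rewrite evC].
  move/existsP: (cov _ Pxv) => [B /andP [HB /andP [M1 M2]]].
  have [|F [[[j jB ->]|DF] e]] := H B HB v.
    move=> y [F [[GF|[i iB ->]] <-]]; first by apply: Hg; exists F; split => //.
    by move/forallP: M1 => /(_ i); rewrite iB.
    by move/forallP: M2 => /(_ j); rewrite jB /= /xv e.
  by exists F; split => //; left.
Qed.

Theorem theorem6p6 (d : Order.disp_t) (V : finTBPOrderType d)
  (S : Type) (ar : S -> nat) (I : forall c : S, ('I_(ar c) -> V) -> V) :
  (\bot : V) != \top ->
  constant_expressive I ->
  forall c : S,
    regular (entails I (@ord_rel d V)) (@App S ar c) ->
    exists (f : ('I_(ar c) -> bool) -> bool) Bp Bc,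
      rule_holds (entails I (@ord_rel d V)) (@App S ar c) Bp Bc /\
      rule_holds cl_entails (@App cl_sig cl_ar (existT _ (ar c) f)) Bp Bc.
Proof.
move=> Hbt CE c [Bp [Bc HR]].
have [Kb HKb] := CE \bot.
have [Kt HKt] := CE \top.
pose Fs (x : 'I_(ar c) -> bool) := fun i => if x i then Kt else Kb.
have evF : forall x v i, eval I v (Fs x i) = if x i then \top else \bot.
  by move=> x v i; rewrite /Fs; case: (x i).
pose v0 := fun _ : nat => (\bot : V).
pose y x := eval I v0 (@App S ar c (Fs x)).
pose E := fun _ : form ar => False.
have bt : (\bot : V) <> \top by move/eqP: Hbt.
have cov : forall x, ~~ PP Bp x -> PP Bc x.
  move=> x nP; case: (boolP (PP Bc x)) => // nQ; exfalso.
  have yb : y x = \bot.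
    have := proj2 (proj1 (HR E E (Fs x))) _ v0.
    case.
      move=> B HB v.
      have : ~~ mt B x by move/existsPn: nP => /(_ B); rewrite HB.
      rewrite negb_and => /orP [/forallPn [i] | /forallPn [j]];
        rewrite negb_imply => /andP [iB xi].
        right; left; exists (Fs x i); split; [right; exists i => // | by rewrite evF (negbTE xi)].
      right; right; exists (Fs x j); split; [left; exists j => // | by rewrite evF (negbNE xi)].
      by move=> [a [b [_ [[F [[] _]] _]]]].
    by case=> [[F [[[] | ->] e]] | [F [[] _]]].
  have yt : y x = \top.
    have := proj2 (proj2 (HR E E (Fs x))) _ v0.
    case.
      move=> B HB v.
      have : ~~ mt B x by move/existsPn: nQ => /(_ B); rewrite HB.
      rewrite negb_and => /orP [/forallPn [i] | /forallPn [j]];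
        rewrite negb_imply => /andP [iB xi].
        right; left; exists (Fs x i); split; [right; exists i => // | by rewrite evF (negbTE xi)].
      right; right; exists (Fs x j); split; [left; exists j => // | by rewrite evF (negbNE xi)].
      by move=> [a [b [[F [[] _]] _]]].
    by case=> [[F [[] _]] | [F [[[] | ->] e]]].
  by apply: bt; rewrite -yb -yt.
have dis : forall x, PP Bc x -> ~~ PP Bp x.
  move=> x /existsP [B' /andP [HB' /andP [M1' M2']]]; apply/negP => /existsP [B /andP [HB /andP [M1 M2]]].
  have x1 : forall i, i \in B.1 -> x i by move=> i iB; move/forallP: M1 => /(_ i); rewrite iB.
  have x2 : forall i, i \in B.2 -> ~~ x i by move=> i iB; move/forallP: M2 => /(_ i); rewrite iB.
  have x1' : forall i, i \in B'.1 -> x i by move=> i iB; move/forallP: M1' => /(_ i); rewrite iB.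
  have x2' : forall i, i \in B'.2 -> ~~ x i by move=> i iB; move/forallP: M2' => /(_ i); rewrite iB.
  have yt : y x = \top.
    have := (proj1 (proj1 (HR E (set_add E (@App S ar c (Fs x))) (Fs x)))) _ B HB v0.
    case.
    + move=> v; left; exists (eval I v (@App S ar c (Fs x))), (eval I v (@App S ar c (Fs x))).
      by split; [|split]; [exists (@App S ar c (Fs x)); split; [right|] ..|].
    + move=> [a [b [[F [[[]|[i iB ->]] <-]] [[G' [[[j jB ->]|[[]| ->]] <-]] le]]]].
        by exfalso; move: le; rewrite !evF x1 // (negbTE (x2 _ jB)) => le; apply: bt; apply/le_anti; rewrite le le0x.
      by move: le; rewrite evF x1 // => le; apply/le_anti; rewrite le lex1.
    + case=> [[F [[[]|[i iB ->]] e]] | [F [[[j jB ->]|[[]| ->]] e]]].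
      - by exfalso; move: e; rewrite evF x1 // => e; apply: bt.
      - by exfalso; move: e; rewrite evF (negbTE (x2 _ jB)).
      - exact: e.
  have yb : y x = \bot.
    have := (proj1 (proj2 (HR (set_add E (@App S ar c (Fs x))) E (Fs x)))) _ B' HB' v0.
    case.
    + move=> v; left; exists (eval I v (@App S ar c (Fs x))), (eval I v (@App S ar c (Fs x))).
      by split; [|split]; [exists (@App S ar c (Fs x)); split; [right|] ..|].
    + move=> [a [b [[F [[[[]| ->]|[i iB ->]] <-]] [[G' [[[j jB ->]|[]] <-]] le]]]].
        by move: le; rewrite evF (negbTE (x2' _ jB)) => le; apply/le_anti; rewrite le le0x.
      by exfalso; move: le; rewrite !evF x1' // (negbTE (x2' _ jB)) => le; apply: bt; apply/le_anti; rewrite le le0x.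
    + case=> [[F [[[[]| ->]|[i iB ->]] e]] | [F [[[j jB ->]|[]] e]]].
      - exact: e.
      - by exfalso; move: e; rewrite evF x1' // => e; apply: bt.
      - by exfalso; move: e; rewrite evF (negbTE (x2' _ jB)).
  by apply: bt; rewrite -yb -yt.
exists (PP Bp), Bp, Bc; split => //.
exact: cl_part.
Qed.
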